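(* Let $\mathcal{H}$ be a complex separable Hilbert space and $\mathcal{E}(\mathcal{H})$ its set of effects. The function $\mathcal{S}_0:\mathcal{E}(\mathcal{H})\to\mathbb{R}$ defined by $$\mathcal{S}_0(A):=\|A\|\,\|I-A\|-\|A(I-A)\|$$ is a sharpness measure.
   Context: An effect is a selfadjoint bounded operator $A$ on $\mathcal{H}$ with $\mathbb{O}\le A\le I$; $\mathcal{E}(\mathcal{H})$ denotes the set of effects and $A':=I-A$. An effect is trivial if $A=\lambda I$ for some $\lambda\in[0,1]$; a nontrivial projection is a projection $P=P^2=P^*$ with $P\neq \mathbb{O},I$. Norms are operator norms. A function $\mathcal{S}:\mathcal{E}(\mathcal{H})\to\mathbb{R}$ is called a sharpness measure if: (S1) $0\le\mathcal{S}(A)\le1$ for all effects $A$; (S2) $\mathcal{S}(A)=0$ iff $A$ is a trivial effect; (S3) $\mathcal{S}(A)=1$ iff $A$ is a nontrivial projection; (S4) $\mathcal{S}(A')=\mathcal{S}(A)$; (S5) $\mathcal{S}(CAC^{-1})=\mathcal{S}(A)$ for every invertible bounded operator $C$ such that $CAC^{-1}$ is an effect; (S6) $A\mapsto\mathcal{S}(A)$ is continuous with respect to the operator norm. *)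

(* Defs.v *)
From HB Require Import structures.
From mathcomp Require Import all_boot all_order all_algebra.
From mathcomp Require Import complex.
From mathcomp Require Import classical_sets reals.

Set Implicit Arguments.
Unset Strict Implicit.
Unset Printing Implicit Defensive.

Import Order.TTheory GRing.Theory Num.Theory.
Local Open Scope ring_scope.
Local Open Scope classical_set_scope.

Section Hilbert.
Variable R : realType.
Variable V : lmodType (R[i]).
Variable ip : V -> V -> R[i].

Definition is_inner_product : Prop :=
  [/\ (forall (a : R[i]) (x y z : V), ip (a *: x + y) z = a * ip x z + ip y z),
      (forall x y : V, ip x y = conjc (ip y x)),
      (forall x : V, 0 <= ip x x) &
      (forall x : V, ip x x = 0 -> x = 0)].

Definition hnorm (x : V) : R := Num.sqrt (complex.Re (ip x x)).

Definition hcomplete : Prop :=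
  forall u : nat -> V,
    (forall e : R, 0 < e -> exists N : nat, forall m n : nat, (N <= m)%N -> (N <= n)%N ->
       hnorm (u m - u n) < e) ->
    exists l : V, forall e : R, 0 < e -> exists N : nat, forall n : nat, (N <= n)%N ->
       hnorm (u n - l) < e.

Definition hseparable : Prop :=
  exists d : nat -> V, forall (x : V) (e : R), 0 < e -> exists n : nat, hnorm (x - d n) < e.

Definition is_linear_op (T : V -> V) : Prop :=
  forall (a : R[i]) (x y : V), T (a *: x + y) = a *: T x + T y.

Definition bounded_op (T : V -> V) : Prop :=
  is_linear_op T /\ exists M : R, forall x : V, hnorm (T x) <= M * hnorm x.

Definition opnorm (T : V -> V) : R :=
  sup [set hnorm (T x) | x in [set x : V | hnorm x <= 1]].

Definition selfadjoint (T : V -> V) : Prop :=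
  forall x y : V, ip (T x) y = ip x (T y).

(* effects: selfadjoint bounded operators with 0 <= A <= I;
   the order on R[i] is the partial order of complex numbers (0 <= z iff z is real >= 0) *)
Definition effect (A : V -> V) : Prop :=
  [/\ bounded_op A, selfadjoint A &
      forall x : V, 0 <= ip (A x) x /\ ip (A x) x <= ip x x].

Definition idop : V -> V := fun x => x.
Definition zeroop : V -> V := fun _ => 0.
Definition complop (A : V -> V) : V -> V := fun x => x - A x.

Definition trivial_effect (A : V -> V) : Prop :=
  exists l : R, 0 <= l <= 1 /\ A = (fun x => (l%:C)%C *: x).

Definition nontrivial_projection (P : V -> V) : Prop :=
  [/\ bounded_op P, (forall x, P (P x) = P x), selfadjoint P, P <> zeroop & P <> idop].

Definition invertible_op (C : V -> V) (D : V -> V) : Prop :=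
  [/\ bounded_op C, bounded_op D, (forall x, C (D x) = x) & (forall x, D (C x) = x)].

(* sharpness measure: axioms (S1)-(S6), for a function defined (at least) on effects *)
Definition sharpness_measure (S : (V -> V) -> R) : Prop :=
  (forall A, effect A -> 0 <= S A <= 1) /\
  (forall A, effect A -> (S A = 0 <-> trivial_effect A)) /\
  (forall A, effect A -> (S A = 1 <-> nontrivial_projection A)) /\
  (forall A, effect A -> S (complop A) = S A) /\
  (forall A C D, effect A -> invertible_op C D ->
                  effect (fun x => C (A (D x))) -> S (fun x => C (A (D x))) = S A) /\
      (forall A, effect A -> forall e : R, 0 < e -> exists d : R, 0 < d /\
                  forall B, effect B -> opnorm (fun x => B x - A x) < d ->
                    `|S B - S A| < e).

Definition S0 (A : V -> V) : R :=
  opnorm A * opnorm (complop A) - opnorm (fun x => A (complop A x)).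

End Hilbert.

(* Main.v *)
Require Import Defs.
From HB Require Import structures.
From mathcomp Require Import all_boot all_order all_algebra.
From mathcomp Require Import complex.
From mathcomp Require Import boolp classical_sets reals.
From mathcomp Require Import ring lra zify.
Set Implicit Arguments.
Unset Strict Implicit.
Unset Printing Implicit Defensive.
Import Order.TTheory GRing.Theory Num.Theory.
Local Open Scope ring_scope.
Local Open Scope classical_set_scope.
Local Open Scope complex_scope.

Section S.
Variable R : realType.
Variable V : lmodType (R[i]).
Variable ip : V -> V -> R[i].
Hypothesis Hip : is_inner_product ip.

Lemma ReM_real (c : R) (z : R[i]) : complex.Re (c%:C * z) = c * complex.Re z.
Proof. by case: z => a b /=; rewrite mul0r subr0. Qed.

Lemma ReD (z w : R[i]) : complex.Re (z + w) = complex.Re z + complex.Re w.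
Proof. by case: z; case: w. Qed.

Lemma Re_conj (z : R[i]) : complex.Re (z^*) = complex.Re z.
Proof. by case: z. Qed.

Lemma rlin (c : R) x y z : complex.Re (ip (c%:C *: x + y) z) = c * complex.Re (ip x z) + complex.Re (ip y z).
Proof. case: Hip => H1 _ _ _. by rewrite H1 ReD ReM_real. Qed.

Lemma rsym x y : complex.Re (ip x y) = complex.Re (ip y x).
Proof. case: Hip => _ H2 _ _. by rewrite H2 Re_conj. Qed.

Lemma rpos x : 0 <= complex.Re (ip x x).
Proof. case: Hip => _ _ H3 _. by have := H3 x; rewrite lecE => /andP[]. Qed.

Lemma rdef x : complex.Re (ip x x) = 0 -> x = 0.
Proof.
case: Hip => _ _ H3 H4 h; apply: H4.
have := ger0_Im (H3 x). case: (ip x x) h => a b /= -> ->. by [].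
Qed.

Lemma quad_nonneg (a b c : R) : 0 <= c ->
  (forall t, 0 <= a + 2 * b * t + c * t ^+ 2) -> b ^+ 2 <= a * c.
Proof.
move=> c0 H; have a0 : 0 <= a by have := H 0; rewrite !(mulr0, expr0n, addr0).
have [cp|] := ltrP 0 c.
  set t := - b / c.
  have ht : t * c = - b by rewrite /t divfK // gt_eqF.
  have := mulr_ge0 (ltW cp) (H t).
  have -> : c * (a + 2 * b * t + c * t ^+ 2) = a * c - b ^+ 2.
    have -> : b = - (t * c) by rewrite ht opprK.
    ring.
  by rewrite subr_ge0.
move=> cle; have c00 : c = 0 by apply/eqP; rewrite eq_le cle c0.
subst c; rewrite mulr0.
have [b0|bn0] := eqVneq b 0; first by rewrite b0 expr0n.
have := H (- (a + 1) / (2 * b)).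
have -> : a + 2 * b * (- (a + 1) / (2 * b)) + 0 * (- (a + 1) / (2 * b)) ^+ 2 = -1.
  rewrite mul0r addr0 mulrCA divff ?mulr1.
    by rewrite opprD addrA subrr sub0r.
  by rewrite mulf_neq0 // pnatr_eq0.
by rewrite oppr_ge0 ler10.
Qed.

Section Form.
Variable g : V -> V -> R.
Hypothesis glin : forall (c : R) x y z, g (c%:C *: x + y) z = c * g x z + g y z.
Hypothesis gsym : forall x y, g x y = g y x.
Hypothesis gpos : forall x, 0 <= g x x.

Lemma g0l z : g 0 z = 0.
Proof. have := glin (-1) 0 0 z. by rewrite scaler0 addr0 mulN1r addNr. Qed.
Lemma gZl c x z : g (c%:C *: x) z = c * g x z.
Proof. by have := glin c x 0 z; rewrite addr0 g0l addr0. Qed.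
Lemma gDl x y z : g (x + y) z = g x z + g y z.
Proof. by have := glin 1 x y z; rewrite rmorph1 scale1r mul1r. Qed.
Lemma gNl x z : g (- x) z = - g x z.
Proof. have -> : - x = (-1)%:C *: x by rewrite rmorphN1 scaleN1r.
by rewrite gZl mulN1r. Qed.
Lemma gBl x y z : g (x - y) z = g x z - g y z.
Proof. by rewrite gDl gNl. Qed.
Lemma gZr c x z : g z (c%:C *: x) = c * g z x.
Proof. by rewrite gsym gZl gsym. Qed.
Lemma gDr x y z : g z (x + y) = g z x + g z y.
Proof. by rewrite gsym gDl !(gsym z). Qed.
Lemma gNr x z : g z (- x) = - g z x.
Proof. by rewrite gsym gNl gsym. Qed.
Lemma gBr x y z : g z (x - y) = g z x - g z y.
Proof. by rewrite gDr gNr. Qed.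
Lemma g0r z : g z 0 = 0.
Proof. by rewrite gsym g0l. Qed.

Lemma gCS x y : g x y ^+ 2 <= g x x * g y y.
Proof.
apply: quad_nonneg => // t.
have := gpos (x + t%:C *: y).
by rewrite !(gDl, gDr, gZl, gZr) (gsym y x); lra.
Qed.
End Form.

Definition rip x y := complex.Re (ip x y).
Local Notation hn := (hnorm ip).

Lemma riplin (c : R) x y z : rip (c%:C *: x + y) z = c * rip x z + rip y z.
Proof. exact: rlin. Qed.
Lemma ripsym x y : rip x y = rip y x. Proof. exact: rsym. Qed.
Lemma rippos x : 0 <= rip x x. Proof. exact: rpos. Qed.

Lemma sq_le (u v : R) : 0 <= v -> u ^+ 2 <= v ^+ 2 -> u <= v.
Proof. move=> v0 h; nra. Qed.

Lemma hn_ge0 x : 0 <= hn x. Proof. exact: sqrtr_ge0. Qed.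
Lemma hn_sq x : hn x ^+ 2 = rip x x. Proof. exact/sqr_sqrtr/rippos. Qed.
Lemma hn0 : hn 0 = 0.
Proof. by rewrite /hnorm -/(rip 0 0) (g0l riplin) sqrtr0. Qed.
Lemma hn_eq0 x : hn x = 0 -> x = 0.
Proof. move=> h; apply: rdef; rewrite -/(rip x x) -hn_sq h expr0n. by []. Qed.
Lemma hn_le0 x : hn x <= 0 -> x = 0.
Proof. move=> h; apply: hn_eq0; apply/eqP; rewrite eq_le h hn_ge0. by []. Qed.
Lemma hnZ c x : hn (c%:C *: x) = `|c| * hn x.
Proof.
rewrite /hnorm -!/(rip _ _) (gZl riplin) (gZr riplin ripsym) mulrA -expr2.
by rewrite sqrtrM ?sqr_ge0 // sqrtr_sqr.
Qed.
Lemma hnN x : hn (- x) = hn x.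
Proof. by rewrite /hnorm -!/(rip _ _) (gNl riplin) (gNr riplin ripsym) opprK. Qed.
Lemma ripCS x y : rip x y <= hn x * hn y.
Proof.
apply: sq_le; first by rewrite mulr_ge0 ?hn_ge0.
by rewrite exprMn !hn_sq; exact: (gCS riplin ripsym rippos).
Qed.
Lemma hnD x y : hn (x + y) <= hn x + hn y.
Proof.
apply: sq_le; first by rewrite addr_ge0 ?hn_ge0.
rewrite hn_sq (gDl riplin) !(gDr riplin ripsym) (ripsym y x) -!hn_sq.
have := ripCS x y; nra.
Qed.
Lemma hnB x y : hn (x - y) <= hn x + hn y.
Proof. by rewrite -(hnN y); apply: hnD. Qed.

Section Lin.
Variable T : V -> V.
Hypothesis HT : is_linear_op T.
Lemma lin0 : T 0 = 0.
Proof. by have := HT (-1) 0 0; rewrite scaler0 addr0 scaleN1r addNr. Qed.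
Lemma linZ c x : T (c *: x) = c *: T x.
Proof. by have := HT c x 0; rewrite !addr0 lin0 addr0. Qed.
Lemma linD x y : T (x + y) = T x + T y.
Proof. by have := HT 1 x y; rewrite !scale1r. Qed.
Lemma linN x : T (- x) = - T x.
Proof. by rewrite -scaleN1r linZ scaleN1r. Qed.
Lemma linB x y : T (x - y) = T x - T y.
Proof. by rewrite linD linN. Qed.
End Lin.

Definition Sset (T : V -> V) := [set hn (T x) | x in [set x : V | hn x <= 1]].

Lemma Sset_ne T : Sset T !=set0.
Proof. exists (hn (T 0)); exists 0 => //=; rewrite hn0. by []. Qed.

Lemma op_ub T x : bounded_op ip T -> hn x <= 1 -> hn (T x) <= opnorm ip T.
Proof.
case=> _ [M HM] hx; apply: ub_le_sup; last by exists x.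
exists `|M| => _ [y hy <-]; apply: (le_trans (HM y)).
have := hn_ge0 y; rewrite /= in hy.
have := ler_norm M. have := normr_ge0 M. nra.
Qed.

Lemma op_le T K : (forall x, hn x <= 1 -> hn (T x) <= K) -> opnorm ip T <= K.
Proof. move=> H; apply: ge_sup; first exact: Sset_ne. by move=> _ [y hy <-]; apply: H. Qed.

Lemma op_ge0 T : bounded_op ip T -> 0 <= opnorm ip T.
Proof.
move=> hT; have := op_ub (x:=0) hT; rewrite hn0 (lin0 (proj1 hT)) hn0; apply. exact: ler01.
Qed.

Lemma op_le' T K : 0 <= K -> (forall x, hn (T x) <= K * hn x) -> opnorm ip T <= K.
Proof.
move=> K0 H; apply: op_le => x hx; apply: (le_trans (H x)).
have := hn_ge0 x; nra.
Qed.

Lemma op_bound T x : bounded_op ip T -> hn (T x) <= opnorm ip T * hn x.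
Proof.
move=> hT; have [hx0|hxn] := eqVneq (hn x) 0.
  by rewrite (hn_eq0 hx0) (lin0 (proj1 hT)) hn0 mulr0.
have hxp : 0 < hn x by rewrite lt_def hxn hn_ge0.
set c := (hn x)^-1.
have cp : 0 < c by rewrite invr_gt0.
have := op_ub (x:=c%:C *: x) hT.
rewrite (linZ (proj1 hT)) !hnZ gtr0_norm // /c mulVf //.
move=> /(_ (lexx _)) h.
rewrite -(mulKf hxn (hn (T x))) mulrC -/c.
have := ler_wpM2r (ltW hxp) h.
have -> : hn x * hn (T x) * c = c * hn (T x) * hn x by rewrite /c; ring.
by [].

Qed.

Lemma ipDl x y z : ip (x + y) z = ip x z + ip y z.
Proof. case: Hip => H1 _ _ _. by have := H1 1 x y z; rewrite scale1r mul1r. Qed.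
Lemma ip0l z : ip 0 z = 0.
Proof. by have := ipDl 0 0 z; rewrite addr0 => /eqP; rewrite -subr_eq0 opprD addrA subrr sub0r oppr_eq0 => /eqP. Qed.
Lemma ipNl x z : ip (- x) z = - ip x z.
Proof. by apply/eqP; rewrite -subr_eq0 opprK -ipDl addNr ip0l. Qed.
Lemma ipBl x y z : ip (x - y) z = ip x z - ip y z.
Proof. by rewrite ipDl ipNl. Qed.
Lemma ipBr x y z : ip z (x - y) = ip z x - ip z y.
Proof. case: Hip => _ H2 _ _. by rewrite H2 ipBl rmorphB (H2 z x) (H2 z y). Qed.

Definition sa_r (T : V -> V) := forall x y, rip (T x) y = rip x (T y).

Lemma sa_sa_r T : selfadjoint ip T -> sa_r T.
Proof. by move=> h x y; rewrite /rip h. Qed.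

Section SAForm.
Variable T : V -> V.
Hypothesis HT : is_linear_op T.
Hypothesis HS : sa_r T.
Lemma Tlin c x y z : rip (T (c%:C *: x + y)) z = c * rip (T x) z + rip (T y) z.
Proof. by rewrite HT riplin. Qed.
Lemma Tsym x y : rip (T x) y = rip (T y) x.
Proof. by rewrite HS ripsym. Qed.

Lemma psd_norm_bound (K : R) : 0 <= K -> (forall x, 0 <= rip (T x) x) ->
  (forall x, rip (T x) x <= K * rip x x) -> forall x, hn (T x) <= K * hn x.
Proof.
move=> K0 Hp HK x.
apply: sq_le; first by rewrite mulr_ge0 ?hn_ge0.
have h := gCS Tlin Tsym Hp x (T x).
have h1 := HK x; have h2 := HK (T x); have h3 := Hp x; have h4 := Hp (T x).
rewrite exprMn !hn_sq.
move: h h1 h2 h3 h4.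
set a := rip (T x) (T x). set s := rip x x.
set p := rip (T x) x. set q := rip (T (T x)) (T x).
move=> h h1 h2 h3 h4.
have a0 : 0 <= a by exact: rippos.
have s0 : 0 <= s by exact: rippos.
have hpq : p * q <= (K * s) * (K * a).
  apply: ler_pM => //.
have hab : a * a <= (K ^+ 2 * s) * a.
  have e : K * s * (K * a) = K ^+ 2 * s * a by ring.
  by rewrite -expr2 -e; exact: le_trans h hpq.
set b := K ^+ 2 * s in hab *.
have b0 : 0 <= b by rewrite /b mulr_ge0 ?sqr_ge0.
nra.
Qed.
End SAForm.

Lemma comp_bounded S T : bounded_op ip S -> bounded_op ip T -> bounded_op ip (fun x => S (T x)).
Proof.
move=> hS hT; split.
  by move=> a x y; rewrite (proj1 hT) (proj1 hS).
exists (opnorm ip S * opnorm ip T) => x.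
apply: (le_trans (op_bound _ hS)).
rewrite -mulrA; apply: ler_wpM2l; first exact: op_ge0.
exact: op_bound.
Qed.

Section Effect.
Variable A : V -> V.
Hypothesis hA : effect ip A.
Lemma ef_bnd : bounded_op ip A. Proof. by case: hA. Qed.
Lemma ef_lin : is_linear_op A. Proof. exact: (proj1 ef_bnd). Qed.
Lemma ef_sa : sa_r A. Proof. by case: hA => _ /sa_sa_r. Qed.
Lemma ef_pos x : 0 <= rip (A x) x.
Proof. by case: hA => _ _ /(_ x) [+ _]; rewrite lecE => /andP[]. Qed.
Lemma ef_le x : rip (A x) x <= rip x x.
Proof. by case: hA => _ _ /(_ x) [_ +]; rewrite lecE => /andP[]. Qed.
Lemma ef_hn x : hn (A x) <= hn x.
Proof.
rewrite -[hn x]mul1r; apply: (psd_norm_bound ef_lin ef_sa ler01 ef_pos).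
by move=> y; rewrite mul1r ef_le.
Qed.
Lemma ef_norm : opnorm ip A <= 1.
Proof. by apply: op_le' => [|x]; [exact: ler01| rewrite mul1r ef_hn]. Qed.
Lemma ef_norm0 : 0 <= opnorm ip A.
Proof. exact: op_ge0 ef_bnd. Qed.
End Effect.

Lemma complop_lin (A : V -> V) : is_linear_op A -> is_linear_op (complop A).
Proof.
move=> hA a x y; rewrite /complop hA scalerBr opprD addrACA. by [].
Qed.

Lemma complop_effect (A : V -> V) : effect ip A -> effect ip (complop A).
Proof.
move=> hA; split.
- split; first exact/complop_lin/(ef_lin hA).
  exists 2 => x; rewrite /complop; apply: (le_trans (hnB _ _)).
  have := ef_hn hA x; lra.
- move=> x y; rewrite /complop ipBl ipBr. by case: hA => _ -> _.
- move=> x; rewrite /complop ipBl subr_ge0 gerBl.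
  by case: hA => _ _ /(_ x) [h1 h2].
Qed.

Definition PP (A : V -> V) := fun x => A (complop A x).

Lemma PP_bnd A : effect ip A -> bounded_op ip (PP A).
Proof. move=> hA; apply: comp_bounded; [exact: ef_bnd| exact/ef_bnd/complop_effect]. Qed.

Lemma PP_sa A : effect ip A -> sa_r (PP A).
Proof.
move=> hA x y; have hl := ef_lin hA; have hs := ef_sa hA.
rewrite /PP /complop hs !(linB hl) (gBl riplin) (gBr riplin ripsym) (hs x) -(hs x (A y)).
by [].
Qed.

Lemma opnorm_PP_le A : effect ip A ->
  opnorm ip (PP A) <= opnorm ip A * opnorm ip (complop A).
Proof.
move=> hA; have hB := complop_effect hA.
apply: op_le' => [|x]; first by rewrite mulr_ge0 ?ef_norm0.
apply: (le_trans (op_bound _ (ef_bnd hA))); rewrite -mulrA.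
apply: ler_wpM2l; [exact: ef_norm0| exact: (op_bound _ (ef_bnd hB))].
Qed.

Lemma S1 A : effect ip A -> 0 <= S0 ip A <= 1.
Proof.
move=> hA; have hB := complop_effect hA; rewrite /S0 -/(PP A).
have h1 := opnorm_PP_le hA; have h2 := op_ge0 (PP_bnd hA).
have h3 := ef_norm hA; have h4 := ef_norm hB; have h5 := ef_norm0 hA; have h6 := ef_norm0 hB.
apply/andP; split; nra.
Qed.

Lemma complopK (A : V -> V) : complop (complop A) = A.
Proof. by apply: funext => x; rewrite /complop opprB addrCA subrr addr0. Qed.

Lemma S4 A : effect ip A -> S0 ip (complop A) = S0 ip A.
Proof.
move=> hA; rewrite /S0 complopK mulrC; congr (_ - opnorm ip _).
apply: funext => x; rewrite /complop (linB (ef_lin hA)). by [].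
Qed.

Lemma hn_sq_le (T : V -> V) : sa_r T -> forall x, hn (T x) ^+ 2 <= hn (T (T x)) * hn x.
Proof.
move=> hs x; rewrite hn_sq hs ripsym; exact: ripCS.
Qed.

Lemma iter_sq (T : V -> V) n x : iter n (fun y => T (T y)) x = iter n.*2 T x.
Proof. by elim: n => [|n IH] //=; rewrite IH. Qed.

Lemma sa_pow k : forall (T : V -> V), is_linear_op T -> sa_r T -> forall x,
  hn (T x) ^+ (2 ^ k) <= hn (iter (2 ^ k) T x) * hn x ^+ (2 ^ k - 1).
Proof.
elim: k => [|k IH] T hl hs x; first by rewrite expn0 subnn expr0 mulr1 expr1.
set T2 := fun y => T (T y).
have hl2 : is_linear_op T2 by move=> a u v; rewrite /T2 hl hl.
have hs2 : sa_r T2 by move=> u v; rewrite /T2 hs hs.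
have := IH T2 hl2 hs2 x; rewrite iter_sq.
have -> : ((2 ^ k).*2 = 2 ^ k.+1)%N by rewrite expnS mul2n.
move=> h.
have e : (2 ^ k.+1 = 2 * 2 ^ k)%N by rewrite expnS.
rewrite [in X in X <= _]e exprM.
have h1 : (hn (T x) ^+ 2) ^+ (2 ^ k) <= (hn (T2 x) * hn x) ^+ (2 ^ k).
  apply: lerXn2r; rewrite ?nnegrE ?exprn_ge0 ?mulr_ge0 ?hn_ge0 //.
  exact: hn_sq_le.
apply: (le_trans h1); rewrite exprMn.
have ek : (2 ^ k.+1 - 1 = (2 ^ k - 1) + 2 ^ k)%N.
  have := expn_gt0 2 k; rewrite expnS; lia.
rewrite ek exprD mulrA; apply: ler_wpM2r; first by rewrite exprn_ge0 ?hn_ge0.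
exact: h.
Qed.

Lemma bernoulli (h : R) n : 0 <= h -> 1 + n%:R * h <= (1 + h) ^+ n.
Proof.
move=> h0; elim: n => [|n IH]; first by rewrite mul0r addr0 expr0.
rewrite exprS -natr1; have := mulr_ge0 h0 (ler0n _ n).
have : 0 <= 1 + n%:R * h by rewrite addr_ge0 ?mulr_ge0 ?ler0n.
nra.
Qed.

Lemma pow_limit (r q K : R) : 0 <= r -> 0 <= q ->
  (forall k, r ^+ (2 ^ k) <= K * q ^+ (2 ^ k)) -> r <= q.
Proof.
move=> r0 q0 H; rewrite leNgt; apply/negP => qr.
have rp : 0 < r by apply: le_lt_trans qr.
have [q00|qn0] := eqVneq q 0.
  by have := H 0%N; rewrite expn0 !expr1 q00 mulr0 => h; have := lt_le_trans rp h; rewrite ltxx.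
have qp : 0 < q by rewrite lt_def qn0 q0.
set t := r / q.
have ht : r = t * q by rewrite /t divfK.
have t1 : 1 < t by rewrite /t ltr_pdivlMr // mul1r.
set h := t - 1.
have hp : 0 < h by rewrite /h subr_gt0.
have Ht : forall k, t ^+ (2 ^ k) <= K.
  move=> k; have := H k; rewrite ht exprMn.
  have qn : 0 < q ^+ (2 ^ k) by rewrite exprn_gt0.
  by rewrite ler_pM2r.
set m := Num.Def.archi_bound (`|K| / h).
have hm : `|K| / h < m%:R by apply: archi_boundP; rewrite divr_ge0 ?normr_ge0 ?ltW.
have hm2 : (m < 2 ^ m)%N by apply: ltn_expl.
have hm3 : (m%:R : R) < (2 ^ m)%:R by rewrite ltr_nat.
have := bernoulli (2 ^ m) (ltW hp).
have -> : 1 + h = t by rewrite /h addrC subrK.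
have := Ht m.
have : `|K| < m%:R * h by rewrite -ltr_pdivrMr.
have := ler_norm K.
have := ler0n R m.
nra.
Qed.

Lemma iter_bound T n y : bounded_op ip T -> hn (iter n T y) <= opnorm ip T ^+ n * hn y.
Proof.
move=> hT; elim: n => [|n IH] /=; first by rewrite expr0 mul1r.
apply: (le_trans (op_bound _ hT)); rewrite exprS -mulrA.
apply: ler_wpM2l; [exact: op_ge0| exact: IH].
Qed.

Lemma iter_conj (C T D T' : V -> V) : (forall x, D (C x) = x) -> (forall x, C (D x) = x) ->
  (forall x, T' x = C (T (D x))) -> forall n x, iter n T' x = C (iter n T (D x)).
Proof.
move=> hDC hCD hT n x; elim: n => [|n IH] /=; first by rewrite hCD.
by rewrite IH hT hDC.
Qed.

Lemma sim_le (T T' C D : V -> V) : bounded_op ip T -> is_linear_op T' -> sa_r T' ->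
  bounded_op ip C -> bounded_op ip D -> (forall x, D (C x) = x) -> (forall x, C (D x) = x) ->
  (forall x, T' x = C (T (D x))) -> opnorm ip T' <= opnorm ip T.
Proof.
move=> hT hl hs hC hD hDC hCD hT'.
apply: op_le' => [|x]; first exact: op_ge0.
apply: (@pow_limit _ _ (opnorm ip C * opnorm ip D)); first exact: hn_ge0.
  by rewrite mulr_ge0 ?hn_ge0 ?op_ge0.
move=> k; set n := (2 ^ k)%N.
have n0 : (0 < n)%N by rewrite expn_gt0.
apply: (le_trans (sa_pow k hl hs x)); rewrite -/n.
rewrite (@iter_conj C T D T' hDC hCD hT').
have h1 := op_bound (iter n T (D x)) hC.
have h2 := iter_bound n (D x) hT.
have h3 := op_bound x hD.
have hx : hn x ^+ n = hn x * hn x ^+ (n - 1).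
  by rewrite -exprS subn1 prednK.
rewrite exprMn hx.
have g1 := op_ge0 hC; have g2 := op_ge0 hD; have g3 := op_ge0 hT.
have g4 : 0 <= hn x ^+ (n - 1) by rewrite exprn_ge0 ?hn_ge0.
have g5 : 0 <= opnorm ip T ^+ n by rewrite exprn_ge0.
have e2 : opnorm ip C * opnorm ip D * (opnorm ip T ^+ n * (hn x * hn x ^+ (n - 1))) =
  (opnorm ip C * (opnorm ip T ^+ n * (opnorm ip D * hn x))) * hn x ^+ (n - 1) by ring.
rewrite e2; apply: ler_wpM2r => //.
apply: (le_trans h1); apply: ler_wpM2l => //.
apply: (le_trans h2); apply: ler_wpM2l => //.
Qed.

Lemma sim_eq (T T' C D : V -> V) : bounded_op ip T -> bounded_op ip T' -> sa_r T -> sa_r T' ->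
  bounded_op ip C -> bounded_op ip D -> (forall x, D (C x) = x) -> (forall x, C (D x) = x) ->
  (forall x, T' x = C (T (D x))) -> opnorm ip T' = opnorm ip T.
Proof.
move=> hT hT' hs hs' hC hD hDC hCD h.
apply/eqP; rewrite eq_le; apply/andP; split.
  exact: (sim_le hT (proj1 hT') hs' hC hD hDC hCD h).
apply: (sim_le hT' (proj1 hT) hs hD hC hCD hDC) => x.
by rewrite h hDC hDC.
Qed.

Lemma S5 A C D : effect ip A -> invertible_op ip C D -> effect ip (fun x => C (A (D x))) ->
  S0 ip (fun x => C (A (D x))) = S0 ip A.
Proof.
move=> hA [hC hD hCD hDC] hB.
set B := fun x => C (A (D x)) in hB *.
have hlC := proj1 hC; have hlD := proj1 hD.
have e1 : opnorm ip B = opnorm ip A.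
  by apply: (sim_eq (ef_bnd hA) (ef_bnd hB) (ef_sa hA) (ef_sa hB) hC hD hDC hCD).
have e2 : opnorm ip (complop B) = opnorm ip (complop A).
  have hA' := complop_effect hA; have hB' := complop_effect hB.
  apply: (sim_eq (ef_bnd hA') (ef_bnd hB') (ef_sa hA') (ef_sa hB') hC hD hDC hCD).
  by move=> x; rewrite /complop (linB hlC) hCD.
have e3 : opnorm ip (PP B) = opnorm ip (PP A).
  apply: (sim_eq (PP_bnd hA) (PP_bnd hB) (PP_sa hA) (PP_sa hB) hC hD hDC hCD).
  by move=> x; rewrite /PP /complop /B (linB hlD) hDC.
by rewrite /S0 -/(PP B) -/(PP A) e1 e2 e3.
Qed.

Lemma id1 (W : zmodType) (p q r s t : W) : (p + q) - (r + s) = ((p - t) + (q - s)) - (r - t).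
Proof. rewrite opprB addrACA subrK -addrA opprD (addrC (- r)) !addrA; reflexivity. Qed.
Lemma id2 (W : zmodType) (p q r s t : W) : (p - t) = (((p + q) - (r + s)) - (q - s)) + (r - t).
Proof. by rewrite (id1 p q r s t) addrAC subrK addrK. Qed.

Lemma hn3 p q r : hn (p + q - r) <= hn p + hn q + hn r.
Proof. apply: (le_trans (hnB _ _)); apply: lerD => //; exact: hnD. Qed.

Lemma hn3' p q r : hn (p - q + r) <= hn p + hn q + hn r.
Proof. apply: (le_trans (hnD _ _)); apply: lerD => //; exact: hnB. Qed.

Lemma S6 A : effect ip A -> forall e : R, 0 < e -> exists d : R, 0 < d /\
  forall B, effect ip B -> opnorm ip (fun x => B x - A x) < d -> `|S0 ip B - S0 ip A| < e.
Proof.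
move=> hA e ep; exists (e / 5%:R); split; first by rewrite divr_gt0 ?ltr0n.
move=> B hB hd.
set E := fun x => B x - A x in hd.
have hlA := ef_lin hA; have hlB := ef_lin hB.
have hE : bounded_op ip E.
  split.
    by move=> a x y; rewrite /E hlA hlB scalerBr opprD addrACA.
  exists 2 => x; rewrite /E; apply: (le_trans (hnB _ _)).
  have := ef_hn hA x; have := ef_hn hB x; lra.
set d := opnorm ip E in hd.
have d0 : 0 <= d by exact: op_ge0.
have bE x : hn (E x) <= d * hn x by exact: op_bound.
have hA' := complop_effect hA; have hB' := complop_effect hB.
have a1 : opnorm ip B <= opnorm ip A + d.
  apply: op_le' => [|x]; first by rewrite addr_ge0 // (ef_norm0 hA).
  have -> : B x = A x + E x by rewrite /E addrC subrK.
  rewrite mulrDl; apply: (le_trans (hnD _ _)); apply: lerD; [exact: op_bound (ef_bnd hA)|exact: bE].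
have a2 : opnorm ip A <= opnorm ip B + d.
  apply: op_le' => [|x]; first by rewrite addr_ge0 // (ef_norm0 hB).
  have -> : A x = B x - E x by rewrite /E subKr.
  rewrite mulrDl; apply: (le_trans (hnB _ _)); apply: lerD; [exact: op_bound (ef_bnd hB)|exact: bE].
have a3 : opnorm ip (complop B) <= opnorm ip (complop A) + d.
  apply: op_le' => [|x]; first by rewrite addr_ge0 // (ef_norm0 hA').
  have -> : complop B x = complop A x - E x by rewrite /complop /E opprB addrA subrK.
  rewrite mulrDl; apply: (le_trans (hnB _ _)); apply: lerD; [exact: op_bound (ef_bnd hA')|exact: bE].
have a4 : opnorm ip (complop A) <= opnorm ip (complop B) + d.
  apply: op_le' => [|x]; first by rewrite addr_ge0 // (ef_norm0 hB').
  have -> : complop A x = complop B x + E x by rewrite /complop /E addrA subrK.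
  rewrite mulrDl; apply: (le_trans (hnD _ _)); apply: lerD; [exact: op_bound (ef_bnd hB')|exact: bE].
have ePA x : PP A x = A x - A (A x) by rewrite /PP /complop (linB hlA).
have eBx x : B x = A x + E x by rewrite /E addrC subrK.
have ePB x : PP B x = (A x + E x) - (B (A x) + B (E x)).
  by rewrite /PP /complop (linB hlB) -(linD hlB) -eBx.
have hPA := PP_bnd hA; have hPB := PP_bnd hB.
have key x : hn (E x - B (E x)) + hn (E (A x)) <= 3%:R * d * hn x.
  have h1 := bE x; have h2 := ef_hn hB (E x); have h3 := bE (A x); have h4 := ef_hn hA x.
  have h5 := hnB (E x) (B (E x)). have h6 := hn_ge0 (A x).
  have : d * hn (A x) <= d * hn x by apply: ler_wpM2l.
  lra.
have a5 : opnorm ip (PP B) <= opnorm ip (PP A) + 3%:R * d.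
  apply: op_le' => [|x]; first by rewrite addr_ge0 ?op_ge0 // mulr_ge0 ?ler0n.
  rewrite ePB (id1 _ _ _ _ (A (A x))) -ePA.
  apply: (le_trans (hn3 _ _ _)); rewrite mulrDl.
  have := op_bound x hPA; have := key x; lra.
have a6 : opnorm ip (PP A) <= opnorm ip (PP B) + 3%:R * d.
  apply: op_le' => [|x]; first by rewrite addr_ge0 ?op_ge0 // mulr_ge0 ?ler0n.
  rewrite ePA (id2 (A x) (E x) (B (A x)) (B (E x)) (A (A x))) -ePB.
  change (B (A x) - A (A x)) with (E (A x)).
  apply: (le_trans (hn3' _ _ _)); rewrite mulrDl.
  have := op_bound x hPB; have := key x; lra.
have n1 := ef_norm hA; have n2 := ef_norm hB; have n3 := ef_norm hA'; have n4 := ef_norm hB'.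
have m1 := ef_norm0 hA; have m2 := ef_norm0 hB; have m3 := ef_norm0 hA'; have m4 := ef_norm0 hB'.
have p1 : opnorm ip B * opnorm ip (complop B) - opnorm ip A * opnorm ip (complop A) <= 2%:R * d.
  nra.
have p2 : opnorm ip A * opnorm ip (complop A) - opnorm ip B * opnorm ip (complop B) <= 2%:R * d.
  nra.
rewrite /S0 -/(PP A) -/(PP B) ltr_norml; apply/andP; split; lra.
Qed.

Lemma key_ineq (M m a b s : R) : 0 <= M -> 0 <= m -> 0 <= a -> 0 <= b -> 0 <= s ->
  a <= M * s -> s - a <= m * s -> a ^+ 2 <= b * s -> b <= a ->
  (a - b) * (M + m) <= M * m * s.
Proof.
move=> M0 m0 a0 b0 s0 h1 h2 h3 h4.
have [s00|sn0] := eqVneq s 0.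
  have a00 : a = 0 by move: h1; rewrite s00 mulr0 => h; apply/eqP; rewrite eq_le h a0.
  have b00 : b = 0 by apply/eqP; rewrite eq_le b0 -a00 h4.
  by rewrite a00 b00 s00 subrr !mul0r mulr0.
have sp : 0 < s by rewrite lt_def sn0 s0.
have u0 : 0 <= M * s - a by rewrite subr_ge0.
have v0 : 0 <= m * s - s + a by move: h2; rewrite -subr_ge0 => h; have -> : m * s - s + a = m * s - (s - a) by ring. 
have w0 : 0 <= b * s - a ^+ 2 by rewrite subr_ge0.
have P1 : 0 <= s * (M * s - a) * (m * s - s + a) by rewrite !mulr_ge0.
have P2 : 0 <= (M * s - a) * (s - a) ^+ 2 by rewrite mulr_ge0 ?sqr_ge0.
have P3 : 0 <= (m * s - s + a) * a ^+ 2 by rewrite mulr_ge0 ?sqr_ge0.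
have P4 : 0 <= s * (b * s - a ^+ 2) * (M + m) by apply: mulr_ge0; [apply: mulr_ge0|apply: addr_ge0].
have E : s ^+ 2 * (M * m * s - (a - b) * (M + m)) =
  s * (M * s - a) * (m * s - s + a) + (M * s - a) * (s - a) ^+ 2 +
  (m * s - s + a) * a ^+ 2 + s * (b * s - a ^+ 2) * (M + m) by ring.
have : 0 <= s ^+ 2 * (M * m * s - (a - b) * (M + m)).
  by rewrite E !addr_ge0.
rewrite pmulr_rge0 ?exprn_gt0 // subr_ge0. by [].
Qed.

Lemma op_zero (T : V -> V) : (forall x, T x = 0) -> opnorm ip T = 0.
Proof.
move=> h; have hb : bounded_op ip T.
  split; first by move=> a x y; rewrite !h scaler0 addr0.
  by exists 0 => x; rewrite h hn0 mul0r.
apply/eqP; rewrite eq_le op_ge0 // andbT.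
by apply: op_le' => // x; rewrite h hn0 mul0r.
Qed.

Lemma op_fixed (T : V -> V) z : bounded_op ip T -> T z = z -> z != 0 -> 1 <= opnorm ip T.
Proof.
move=> hT hz zn0.
have hzp : 0 < hn z.
  rewrite lt_def hn_ge0 andbT; apply/eqP => h; move/eqP: zn0; apply; exact: hn_eq0.
have := op_ub (x := (hn z)^-1%:C *: z) hT.
rewrite (linZ (proj1 hT)) hz hnZ gtr0_norm ?invr_gt0 // mulVf ?gt_eqF //.
by apply; rewrite lexx.
Qed.

Lemma witness (T : V -> V) (u : V -> V) : T <> u -> exists y, T y != u y.
Proof.
move=> hne; case: (pselect (exists y, T y != u y)) => // hn.
exfalso; apply: hne; apply: funext => y; apply/eqP; apply/negPn/negP => h.
by apply: hn; exists y.
Qed.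

Lemma form_le (T : V -> V) x : bounded_op ip T -> rip (T x) x <= opnorm ip T * rip x x.
Proof.
move=> hT; apply: (le_trans (ripCS _ _)); rewrite -hn_sq expr2 mulrA.
apply: ler_wpM2r; [exact: hn_ge0| exact: op_bound].
Qed.

Lemma S3 A : effect ip A -> (S0 ip A = 1 <-> nontrivial_projection ip A).
Proof.
move=> hA; have hB := complop_effect hA; have hl := ef_lin hA.
have n1 := ef_norm hA; have n2 := ef_norm hB; have m1 := ef_norm0 hA; have m2 := ef_norm0 hB.
have hP := opnorm_PP_le hA; have hP0 := op_ge0 (PP_bnd hA).
rewrite /S0 -/(PP A); split.
  move=> h.
  have NP0 : opnorm ip (PP A) <= 0 by nra.
  have hN1 : opnorm ip A != 0 by apply/eqP => e; rewrite e mul0r in h; nra.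
  have hN2 : opnorm ip (complop A) != 0 by apply/eqP => e; rewrite e mulr0 in h; nra.
  split.
  - exact: ef_bnd hA.
  - move=> x; have := op_bound x (PP_bnd hA).
    move=> h1; have h2 : hn (PP A x) <= 0.
      apply: (le_trans h1); have := hn_ge0 x; nra.
    have := hn_le0 h2; rewrite /PP /complop (linB hl) => /subr0_eq. by [].
  - by case: hA.
  - move=> e; move/eqP: hN1; apply; apply: op_zero => x; rewrite e. by [].
  - move=> e; move/eqP: hN2; apply; apply: op_zero => x; rewrite /complop e /idop subrr. by [].
case=> hb hproj hsa hz hI.
have NP0 : opnorm ip (PP A) = 0.
  by apply: op_zero => x; rewrite /PP /complop (linB hl) hproj subrr.
have [y hy] := witness hz.
have g1 : 1 <= opnorm ip A.
  apply: (op_fixed (z := A y) hb (hproj y)); exact: hy.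
have [y' hy'] := witness hI.
have g2 : 1 <= opnorm ip (complop A).
  apply: (op_fixed (z := y' - A y') (ef_bnd hB)).
    by rewrite /complop (linB hl) hproj subrr subr0.
  by rewrite subr_eq0 eq_sym.
rewrite NP0 subr0.
have e1 : opnorm ip A = 1 by apply/eqP; rewrite eq_le n1 g1.
have e2 : opnorm ip (complop A) = 1 by apply/eqP; rewrite eq_le n2 g2.
by rewrite e1 e2 mulr1.
Qed.

Lemma opnorm_scal (T : V -> V) (c : R) : (exists x0 : V, x0 != 0) -> 0 <= c ->
  (forall x, T x = c%:C *: x) -> opnorm ip T = c.
Proof.
move=> [x0 hx0] c0 hT.
have hb : bounded_op ip T.
  split; first by move=> a x y; rewrite !hT scalerDr !scalerA mulrC.
  by exists c => x; rewrite hT hnZ ger0_norm.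
apply/eqP; rewrite eq_le; apply/andP; split.
  by apply: op_le' => // x; rewrite hT hnZ ger0_norm.
have hzp : 0 < hn x0.
  rewrite lt_def hn_ge0 andbT; apply/eqP => h; move/eqP: hx0; apply; exact: hn_eq0.
have := op_ub (x := (hn x0)^-1%:C *: x0) hb.
rewrite hT !hnZ gtr0_norm ?invr_gt0 // ger0_norm // mulVf ?gt_eqF // mulr1.
by apply.
Qed.

Lemma ef_b_le_a A x : effect ip A -> rip (A x) (A x) <= rip (A x) x.
Proof.
move=> hA; have hl := ef_lin hA; have hs := ef_sa hA.
have h := gCS (Tlin hl) (Tsym hs) (ef_pos hA) x (A x).
have h2 := ef_le hA (A x).
have a0 := ef_pos hA x; have b0 := rippos (A x).
move: h h2 a0 b0; set a := rip (A x) x; set b := rip (A x) (A x).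
set q := rip (A (A x)) (A x) => h h2 a0 b0.
have : b ^+ 2 <= a * b.
  apply: (le_trans h); apply: ler_wpM2l => //.
nra.
Qed.

Lemma ripPP A x : effect ip A -> rip (PP A x) x = rip (A x) x - rip (A x) (A x).
Proof.
move=> hA; rewrite /PP /complop (linB (ef_lin hA)) (gBl riplin) (ef_sa hA (A x)). by [].
Qed.

Lemma S2 A : effect ip A -> (S0 ip A = 0 <-> trivial_effect A).
Proof.
move=> hA; have hB := complop_effect hA; have hl := ef_lin hA.
have n1 := ef_norm hA; have n2 := ef_norm hB; have m1 := ef_norm0 hA; have m2 := ef_norm0 hB.
have hPb := PP_bnd hA; have hP0 := op_ge0 hPb.
rewrite /S0 -/(PP A); split; last first.
  case=> l [/andP [l0 l1] hAl].
  have eA x : A x = l%:C *: x by rewrite hAl.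
  have eB x : complop A x = (1 - l)%:C *: x by rewrite /complop eA rmorphB rmorph1 scalerBl scale1r.
  have eP x : PP A x = (l * (1 - l))%:C *: x by rewrite /PP eB eA scalerA rmorphM.
  case: (pselect (exists x0 : V, x0 != 0)) => hex.
    rewrite (opnorm_scal hex l0 eA) (opnorm_scal hex _ eB) ?subr_ge0 //.
    by rewrite (opnorm_scal hex _ eP) ?subrr // mulr_ge0 // subr_ge0.
  have z (x : V) : x = 0 by apply/eqP; apply/negPn/negP => h; apply: hex; exists x.
  have zA : opnorm ip A = 0 by apply: op_zero => x; rewrite (z x) (lin0 hl).
  have zB : opnorm ip (complop A) = 0 by apply: op_zero => x; rewrite (z x) (lin0 (ef_lin hB)).
  have zP : opnorm ip (PP A) = 0 by apply: op_zero => x; rewrite (z x) (lin0 (proj1 hPb)).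
  by rewrite zA zB zP mulr0 subrr.
move=> h0.
set M := opnorm ip A in h0 n1 m1. set m := opnorm ip (complop A) in h0 n2 m2.
have [M00|Mn0] := eqVneq M 0.
  exists 0; split; first by rewrite lexx ler01.
  apply: funext => x; rewrite rmorph0 scale0r.
  apply: hn_le0; have := op_bound x (ef_bnd hA); rewrite -/M M00 mul0r. by [].
have [m00|mn0] := eqVneq m 0.
  exists 1; split; first by rewrite lexx ler01.
  apply: funext => x; rewrite rmorph1 scale1r.
  have := op_bound x (ef_bnd hB); rewrite -/m m00 mul0r => /hn_le0.
  by rewrite /complop => /subr0_eq.
have Mp : 0 < M by rewrite lt_def Mn0 m1.
have mp : 0 < m by rewrite lt_def mn0 m2.
have Mmp : 0 < M + m by rewrite addr_gt0.
set K := M * m / (M + m).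
have K0 : 0 <= K by rewrite /K divr_ge0 ?mulr_ge0 ?ltW.
have hform x : rip (PP A x) x <= K * rip x x.
  rewrite ripPP // /K mulrAC ler_pdivlMr //.
  apply: (key_ineq m1 m2 (ef_pos hA x) (rippos _) (rippos _)).
  - exact: form_le (ef_bnd hA).
  - have := form_le x (ef_bnd hB); rewrite /complop (gBl riplin). by [].
  - exact: (gCS riplin ripsym rippos).
  - exact: ef_b_le_a.
have hpos x : 0 <= rip (PP A x) x by rewrite ripPP // subr_ge0 ef_b_le_a.
have hPK : opnorm ip (PP A) <= K.
  apply: op_le' => // x.
  exact: (psd_norm_bound (proj1 hPb) (PP_sa hA) K0 hpos hform).
have hsum : M + m <= 1.
  have e : opnorm ip (PP A) = M * m by move/eqP: h0; rewrite subr_eq0 => /eqP <-.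
  rewrite e /K in hPK.
  have Mm : 0 < M * m by rewrite mulr_gt0.
  move: hPK; rewrite ler_pdivlMr // => hh.
  rewrite -(ler_pM2l Mm) mulr1; exact: hh.
have haM x : rip (A x) x = M * rip x x.
  have h1 := form_le x (ef_bnd hA).
  have h2 := form_le x (ef_bnd hB).
  rewrite /complop (gBl riplin) in h2.
  have := rippos x; rewrite -/M -/m in h1 h2.
  move=> s0; apply/eqP; rewrite eq_le h1 /=.
  nra.
set B := fun x => A x - M%:C *: x.
have hlB : is_linear_op B.
  move=> c x y; rewrite /B hl scalerDr scalerBr !scalerA (mulrC M%:C c) opprD addrACA. by [].
have hsB : sa_r B.
  move=> x y; rewrite /B (gBl riplin) (gBr riplin ripsym) (gZl riplin) (gZr riplin ripsym).
  by rewrite (ef_sa hA).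
have hBpos x : 0 <= rip (B x) x by rewrite /B (gBl riplin) (gZl riplin) haM subrr.
have hBle x : rip (B x) x <= 0 * rip x x by rewrite /B (gBl riplin) (gZl riplin) haM subrr mul0r.
exists M; split; first by rewrite m1 /=; have := ltW mp; lra.
apply: funext => x; apply/eqP; rewrite -subr_eq0; apply/eqP.
apply: hn_le0; have := psd_norm_bound hlB hsB (lexx 0) hBpos hBle x.
by rewrite mul0r.
Qed.
End S.

Theorem mainTheorem2 (R : realType) (V : lmodType (R[i])) (ip : V -> V -> R[i])
  (Hip : is_inner_product ip) (Hcomplete : hcomplete ip) (Hsep : hseparable ip) :
  sharpness_measure ip (S0 ip).
Proof.
split; first exact: S1 Hip.
split; first exact: S2 Hip.
split; first exact: S3 Hip.
split; first by move=> A hA; apply: S4.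
split.
move=> A C D hA hCD hB.
exact (S5 Hip hA hCD hB).
move=> A hA; exact (S6 Hip hA).
Qed.
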